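(* Let $K=2L$ with $L\ge1$ an integer, let $N\ge1$ be divisible by $L$, put $M=N/L$, and let $\alpha\in[0,2]$. Let $\sigma$ be the mixed strategy of $\mathcal{B}_\alpha(N,K)$ that randomizes uniformly over the $M+1$ pure strategies $(j,\,M-j,\,j,\,M-j,\,\ldots,\,j,\,M-j)'$, $j=0,1,\ldots,M$. Then $\sigma$ is a symmetric equilibrium strategy of $\mathcal{B}_\alpha(N,K)$. (In particular, in $\mathcal{B}_\alpha(6,4)$, uniform randomization over $(0,3,0,3)',(1,2,1,2)',(2,1,2,1)',(3,0,3,0)'$ is a symmetric equilibrium strategy.)
   Context: Fix integers $N\ge1$, $K\ge2$ and a real number $\alpha$. The Colonel Blotto game $\mathcal{B}_\alpha(N,K)$ is the two-player simultaneous-move game with players $A,B$, each with pure strategy set $S=\{s\in\{0,1,\ldots,N\}^K:\sum_{k=1}^K s_k=N\}$, in which the payoff of player $i$ at the pure profile $(s^i,s^{-i})$ is $\pi^i(s^i,s^{-i})=\sum_{k=1}^K\big(\mathbf 1[s^i_k>s^{-i}_k]+\tfrac{\alpha}{2}\mathbf 1[s^i_k=s^{-i}_k]\big)$. Mixed strategies are probability distributions on $S$, with expected payoffs under independent randomization. A symmetric equilibrium strategy is a mixed strategy $\sigma$ such that $(\sigma,\sigma)$ is a Nash equilibrium. *)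

(* Defs.v *)
From HB Require Import structures.
From mathcomp Require Import all_boot all_order all_algebra.
Set Implicit Arguments. Unset Strict Implicit. Unset Printing Implicit Defensive.
Import Order.TTheory GRing.Theory Num.Theory.
Local Open Scope ring_scope.

(* Candidate pure strategies: allocations s : 'I_K -> {0..N}; the genuine
   pure strategy set S of B_alpha(N,K) is those with sum_k s_k = N. *)
Definition alloc (N K : nat) := {ffun 'I_K -> 'I_N.+1}.

Definition is_pure (N K : nat) (s : alloc N K) : bool :=
  (\sum_(k < K) (s k : nat))%N == N.

Definition payoff (R : realFieldType) (N K : nat) (alpha : R)
    (si sj : alloc N K) : R :=
  \sum_(k < K) (((sj k < si k)%N)%:R + alpha / 2%:R * ((si k : nat) == sj k)%:R).

Definition is_mixed (R : realFieldType) (N K : nat) (sigma : alloc N K -> R) : Prop :=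
  (forall s, 0 <= sigma s) /\
  (forall s, ~~ is_pure s -> sigma s = 0) /\
  \sum_(s : alloc N K) sigma s = 1.

Definition exp_payoff (R : realFieldType) (N K : nat) (alpha : R)
    (sigma tau : alloc N K -> R) : R :=
  \sum_(s : alloc N K) \sum_(t : alloc N K) sigma s * tau t * payoff alpha s t.

Definition nash_eq (R : realFieldType) (N K : nat) (alpha : R)
    (sA sB : alloc N K -> R) : Prop :=
  is_mixed sA /\ is_mixed sB /\
  (forall tau, is_mixed tau -> exp_payoff alpha tau sB <= exp_payoff alpha sA sB) /\
  (forall tau, is_mixed tau -> exp_payoff alpha tau sA <= exp_payoff alpha sB sA).

Definition symmetric_equilibrium (R : realFieldType) (N K : nat) (alpha : R)
    (sigma : alloc N K -> R) : Prop := nash_eq alpha sigma sigma.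

(* The pure strategy (j, M-j, j, M-j, ...) (battlefields indexed from 0). *)
Definition alt_strat (N K M j : nat) : alloc N K :=
  [ffun k : 'I_K => inord (if odd k then M - j else j)%N].

Definition alt_mixed (R : realFieldType) (N K M : nat) (s : alloc N K) : R :=
  if [exists j : 'I_M.+1, s == alt_strat N K M j] then (M.+1%:R)^-1 else 0.

(* Main.v *)
Require Import Defs.
From HB Require Import structures.
From mathcomp Require Import all_boot all_order all_algebra.
Import Order.TTheory GRing.Theory Num.Theory.
Local Open Scope ring_scope.
Set Implicit Arguments. Unset Strict Implicit.

Lemma sum_ind (R : realFieldType) (c : R) (x n : nat) :
  \sum_(j < n) (((j < x)%N)%:R + c * ((x == j)%N)%:R) =
  (minn x n)%:R + (if (x < n)%N then c else 0).
Proof.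
elim: n => [|n IH]; first by rewrite big_ord0 minn0 ltn0 addr0.
rewrite big_ord_recr /= IH.
case: (ltngtP x n) => h.
- rewrite (minn_idPl (leqW (ltnW h))) ltnS (ltnW h).
  by rewrite mulr0 !addr0.
- rewrite (minn_idPr h) ltnNge h /=.
  by rewrite mulr0 !addr0 natr1.
- subst x; rewrite ltnSn (minn_idPl (leqnSn n)) mulr1 /=.
  by rewrite !(addr0, add0r, mulr1, mulr0).
Qed.

Lemma sum_rev (R : realFieldType) (n : nat) (F : nat -> R) :
  \sum_(j < n.+1) F (n - j)%N = \sum_(j < n.+1) F j.
Proof.
rewrite (reindex_inj rev_ord_inj) /=; apply eq_bigr => j _.
by rewrite subSS subKn // -ltnS.
Qed.

Lemma sum_alt (a b L : nat) :
  (\sum_(k < (2 * L)%N) (if odd k then a else b))%N = (L * (a + b))%N.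
Proof.
elim: L => [|L IH]; first by rewrite muln0 big_ord0.
have -> : (2 * L.+1 = (2 * L).+2)%N by rewrite mulnS.
rewrite !big_ord_recr /= IH mul2n odd_double /=.
by rewrite -addnA (addnC b a) addnC mulSn.
Qed.

Lemma alt_val (N K M : nat) (j : 'I_M.+1) (k : 'I_K) : (M <= N)%N ->
  (alt_strat N K M j k : nat) = if odd k then (M - j)%N else j.
Proof.
move=> hMN; rewrite ffunE inordK //; case: ifP => _; rewrite ltnS.
  exact: leq_trans (leq_subr _ _) hMN.
by apply: leq_trans hMN; rewrite -ltnS.
Qed.

Definition hfun (R : realFieldType) (c : R) (M x : nat) : R :=
  (minn x M.+1)%:R + (if (x < M.+1)%N then c else 0).

Lemma field_sum (R : realFieldType) (c : R) (N K M : nat) (k : 'I_K) (x : nat) :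
  (M <= N)%N ->
  \sum_(j < M.+1) ((((alt_strat N K M j k : nat) < x)%N)%:R
                   + c * ((x == (alt_strat N K M j k : nat))%N)%:R) = hfun c M x.
Proof.
move=> hMN; case: (boolP (odd k)) => hk.
  under eq_bigr => j _ do rewrite alt_val // hk.
  rewrite (@sum_rev _ M (fun v => ((v < x)%N)%:R + c * ((x == v)%N)%:R)).
  exact: sum_ind.
under eq_bigr => j _ do rewrite alt_val // (negbTE hk).
exact: sum_ind.
Qed.

Lemma G_eq (R : realFieldType) (alpha : R) (N K M : nat) (s : alloc N K) :
  (M <= N)%N ->
  \sum_(j < M.+1) payoff alpha s (alt_strat N K M j) =
  \sum_(k < K) hfun (alpha / 2%:R) M (s k).
Proof.
move=> hMN; rewrite /payoff exchange_big /=; apply: eq_bigr => k _.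
exact: field_sum.
Qed.

Lemma hfun_le (R : realFieldType) (c : R) M x : 0 <= c -> hfun c M x <= x%:R + c.
Proof.
move=> hc; rewrite /hfun lerD //; first by rewrite ler_nat geq_minl.
by case: ifP.
Qed.

Lemma hfun_eq (R : realFieldType) (c : R) M x : (x <= M)%N -> hfun c M x = x%:R + c.
Proof.
by move=> hx; rewrite /hfun ltnS hx (minn_idPl (leqW hx)).
Qed.

Lemma alt_pure (N L M : nat) (j : 'I_M.+1) : (M <= N)%N -> (L * M = N)%N ->
  is_pure (alt_strat N (2 * L)%N M j).
Proof.
move=> hMN hLM; rewrite /is_pure.
rewrite (eq_bigr (fun k : 'I_(2*L)%N => if odd k then M - j else j)%N); last first.
  by move=> k _; rewrite alt_val.
rewrite (sum_alt (M - j) j L) subnK //.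
  by rewrite hLM.
by rewrite -ltnS.
Qed.

Lemma alt_inj (N K M : nat) : (0 < K)%N -> (M <= N)%N ->
  injective (fun j : 'I_M.+1 => alt_strat N K M j).
Proof.
move=> hK hMN i j /(congr1 (fun f : alloc N K => (f (Ordinal hK) : nat))).
by rewrite /= !alt_val //= => /val_inj.
Qed.

Lemma sum_sig (R : realFieldType) (N K M : nat) (F : alloc N K -> R) :
  (0 < K)%N -> (M <= N)%N ->
  \sum_(t : alloc N K) @alt_mixed R N K M t * F t =
  (M.+1%:R)^-1 * \sum_(j < M.+1) F (alt_strat N K M j).
Proof.
move=> hK hMN.
have -> : \sum_(t : alloc N K) @alt_mixed R N K M t * F t =
   \sum_(t in [set alt_strat N K M j | j : 'I_M.+1]) (M.+1%:R)^-1 * F t.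
  rewrite [RHS]big_mkcond /=; apply: eq_bigr => t _; rewrite /alt_mixed.
  have -> : (t \in [set alt_strat N K M j | j : 'I_M.+1]) =
            [exists j : 'I_M.+1, t == alt_strat N K M j].
    apply/imsetP/existsP => [[j _ ->]|[j /eqP ->]]; exists j => //.
  by case: ifP => _; rewrite ?mul0r.
rewrite -big_distrr big_imset //=.
by move=> i j _ _; apply: alt_inj.
Qed.

Unset Implicit Arguments.

Theorem mainTheorem11 (R : realFieldType) (L N : nat) (alpha : R) :
  (1 <= L)%N -> (1 <= N)%N -> (L %| N)%N -> 0 <= alpha <= 2%:R ->
  @symmetric_equilibrium R N (2 * L)%N alpha (@alt_mixed R N (2 * L)%N (N %/ L)%N).
Proof.
move=> hL hN hLN /andP[ha0 ha2].
have hMN : (N %/ L <= N)%N by apply: leq_div.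
have hLM : (L * (N %/ L) = N)%N by rewrite mulnC divnK.
have hK : (0 < (2 * L))%N by rewrite muln_gt0.
set M := (N %/ L)%N in hMN hLM *.
set K := (2 * L)%N in hK *.
set c := alpha / 2%:R.
have hc : 0 <= c by rewrite /c divr_ge0.
set B := N%:R + c *+ K.
set sig := @alt_mixed R N K M.
set inv := (M.+1%:R : R)^-1.
have hinv : 0 < inv by rewrite /inv invr_gt0 ltr0Sn.
have hGle : forall s : alloc N K, is_pure s ->
    \sum_(j < M.+1) payoff alpha s (alt_strat N K M j) <= B.
  move=> s /eqP hs; rewrite G_eq //.
  apply: le_trans (ler_sum _ (fun k _ => hfun_le M (s k) hc)) _.
  by rewrite big_split /= -natr_sum hs sumr_const card_ord.
have hGalt : forall j : 'I_M.+1,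
    \sum_(i < M.+1) payoff alpha (alt_strat N K M j) (alt_strat N K M i) = B.
  move=> j; rewrite G_eq //.
  rewrite (eq_bigr (fun k => ((alt_strat N K M j k : nat))%:R + c)); last first.
    move=> k _; apply: hfun_eq; rewrite alt_val //; case: ifP => _.
      exact: leq_subr.
    by rewrite -ltnS.
  have /eqP hs := alt_pure j hMN hLM.
  by rewrite big_split /= -natr_sum hs sumr_const card_ord.
have hexp : forall tau, exp_payoff alpha tau sig =
    \sum_s tau s * (inv * \sum_(j < M.+1) payoff alpha s (alt_strat N K M j)).
  move=> tau; rewrite /exp_payoff; apply: eq_bigr => s _.
  rewrite /inv -sum_sig // big_distrr; apply: eq_bigr => t _.
  by rewrite /= mulrA.
have hsig : exp_payoff alpha sig sig = inv * B.
  rewrite hexp sum_sig //.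
  under eq_bigr => j _ do rewrite hGalt.
  have hI : inv *+ M.+1 = 1 by rewrite /inv -(mulr_natr (M.+1%:R : R)^-1) mulVf // pnatr_eq0.
  by rewrite sumr_const card_ord -mulrnAl hI mul1r.
have hle : forall tau, is_mixed tau -> exp_payoff alpha tau sig <= inv * B.
  move=> tau [h0 [hnp h1]]; rewrite hexp.
  apply: le_trans (_ : \sum_s tau s * (inv * B) <= _).
    apply: ler_sum => s _; case: (boolP (is_pure s)) => hp.
      by apply: ler_wpM2l; [exact: h0 | apply: ler_wpM2l; [exact: ltW hinv | exact: hGle]].
    by rewrite hnp // !mul0r.
  by rewrite -big_distrl /= h1 mul1r.
have hmix : is_mixed sig.
  split.
    by move=> s; rewrite /sig /alt_mixed; case: ifP => _ //; rewrite invr_ge0 ler0n.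
  split.
    move=> s hnp; rewrite /sig /alt_mixed; case: ifP => //.
    by move/existsP => [j /eqP hs]; move: hnp; rewrite hs alt_pure.
  rewrite -(eq_bigr _ (fun t _ => mulr1 (sig t))) sum_sig // sumr_const card_ord.
  by rewrite mulVf // pnatr_eq0.
rewrite /symmetric_equilibrium /nash_eq.
split; first exact: hmix.
split; first exact: hmix.
by split => tau htau; rewrite hsig; apply: hle.
Qed.
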